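(* Let $m,k\ge1$, $N=m+k$, let $\Phi$ be a Minkowski norm on $\mathbb{R}^m$ and $\Psi$ a Minkowski norm on $\mathbb{R}^k$, with dual norms $\Phi^0,\Psi^0$. For $\varepsilon>0$ let $K(z,\sigma)=(\varepsilon^2+\Phi^0(z)^2)^2+16\,\Psi^0(\sigma)^2$ on $\mathbb{R}^N$. Then $$\Phi(\nabla_z K)^2+\frac{\Phi^0(z)^2}{4}\Psi(\nabla_\sigma K)^2=16\,\Phi^0(z)^2\,K.$$
   Context: Points of $\mathbb{R}^N=\mathbb{R}^m\times\mathbb{R}^k$ are written $(z,\sigma)$. A Minkowski norm on $\mathbb{R}^n$ is a function $M:\mathbb{R}^n\to[0,\infty)$ such that $M^2\in C^2(\mathbb{R}^n\setminus\{0\})$ is strictly convex and $M(\lambda x)=|\lambda|M(x)$ for all $x$, $\lambda\in\mathbb{R}$; its dual norm is $M^0(x)=\sup_{M(\xi)=1}\langle x,\xi\rangle$. *)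

(* Defs.v *)
From HB Require Import structures.
From mathcomp Require Import all_boot all_order all_algebra.
From mathcomp Require Import all_classical all_reals all_analysis.
Set Implicit Arguments. Unset Strict Implicit. Unset Printing Implicit Defensive.
Import Order.TTheory GRing.Theory Num.Theory.
Import numFieldNormedType.Exports.
Local Open Scope classical_set_scope.
Local Open Scope ring_scope.

Section Defs.
Variable R : realType.

Definition evec (n : nat) (i : 'I_n) : 'rV[R]_n := delta_mx ord0 i.

Definition inner (n : nat) (x y : 'rV[R]_n) : R := \sum_(i < n) x ord0 i * y ord0 i.

Definition C2_on (n : nat) (U : set 'rV[R]_n) (f : 'rV[R]_n -> R) : Prop :=
  open U /\
  (forall i x, U x -> derivable f x (evec i)) /\
  (forall i, {within U, continuous (fun x => derive f x (evec i))}) /\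
  (forall i j x, U x -> derivable (fun y => derive f y (evec j)) x (evec i)) /\
  (forall i j, {within U, continuous
       (fun x => derive (fun y => derive f y (evec j)) x (evec i))}).

Definition minkowski_norm (n : nat) (M : 'rV[R]_n -> R) : Prop :=
  (forall x, 0 <= M x) /\
  C2_on (~` [set 0]) (fun x => M x ^+ 2) /\
  (forall x y t, x != y -> 0 < t < 1 ->
     M (t *: x + (1 - t) *: y) ^+ 2 < t * M x ^+ 2 + (1 - t) * M y ^+ 2) /\
  (forall (l : R) x, M (l *: x) = `|l| * M x).

Definition dual_norm (n : nat) (M : 'rV[R]_n -> R) (x : 'rV[R]_n) : R :=
  sup [set inner x xi | xi in [set xi | M xi = 1]].

Definition grad_z (m k : nat) (K : 'rV[R]_m * 'rV[R]_k -> R) p : 'rV[R]_m :=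
  \row_i derive K p (evec i, 0).
Definition grad_s (m k : nat) (K : 'rV[R]_m * 'rV[R]_k -> R) p : 'rV[R]_k :=
  \row_i derive K p (0, evec i).
End Defs.

(* Main.v *)
Require Import Defs.
From HB Require Import structures.
From mathcomp Require Import all_boot all_order all_algebra.
From mathcomp Require Import all_classical all_reals all_analysis.
From mathcomp Require Import ring lra.
Import Order.TTheory GRing.Theory Num.Theory.
Import numFieldNormedType.Exports.
Local Open Scope classical_set_scope.
Local Open Scope ring_scope.

Module P1.


Section MinkFacts.
Variables (R : realType) (n : nat) (M : 'rV[R]_n -> R).
Hypothesis M_ge0 : forall x, 0 <= M x.
Hypothesis M_conv : forall x y t, x != y -> 0 < t < 1 ->
     M (t *: x + (1 - t) *: y) ^+ 2 < t * M x ^+ 2 + (1 - t) * M y ^+ 2.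
Hypothesis M_hom : forall (l : R) x, M (l *: x) = `|l| * M x.

Lemma M0 : M 0 = 0.
Proof. by have := M_hom 0 0; rewrite scale0r normr0 mul0r. Qed.

Lemma MN x : M (- x) = M x.
Proof. by have := M_hom (-1) x; rewrite scaleN1r normrN normr1 mul1r. Qed.

Lemma M_gt0 x : x != 0 -> 0 < M x.
Proof.
move=> x0; have xNx : x != - x.
  apply/negP => /eqP h; move/negP: x0; apply; apply/eqP.
  have : x + x = 0 by rewrite {2}h subrr.
  by rewrite -mulr2n -scaler_nat => /eqP; rewrite scaler_eq0 pnatr_eq0 /= => /eqP.
have h12 : 0 < (2^-1 : R) < 1.
  by rewrite invr_gt0 ltr0n /= invf_lt1 // ltr1n.
have := M_conv _ _ _ xNx h12.
have -> : 2^-1 *: x + (1 - 2^-1) *: - x = 0 :> 'rV[R]_n.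
  have -> : 1 - 2^-1 = 2^-1 :> R by field.
  by rewrite scalerN subrr.
rewrite M0 expr0n /= MN -mulrDl subrKC mul1r => h.
by rewrite lt0r M_ge0 andbT; apply: contraTneq h => ->; rewrite expr0n ltxx.
Qed.

Lemma M_convw x y t : 0 <= t <= 1 ->
  M (t *: x + (1 - t) *: y) ^+ 2 <= t * M x ^+ 2 + (1 - t) * M y ^+ 2.
Proof.
move=> /andP[t0 t1].
have [->|xy] := eqVneq x y.
  by rewrite -scalerDl subrKC scale1r -mulrDl subrKC mul1r.
case: (eqVneq t 0) => [->|tn0].
  by rewrite scale0r add0r subr0 scale1r mul0r add0r mul1r.
case: (eqVneq t 1) => [->|tn1].
  by rewrite scale1r subrr scale0r addr0 mul0r addr0 mul1r.
apply/ltW/M_conv => //.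
by rewrite lt0r tn0 t0 /= lt_neqAle tn1 t1.
Qed.

Lemma M_tri x y : M (x + y) <= M x + M y.
Proof.
have [->|x0] := eqVneq x 0; first by rewrite add0r M0 add0r.
have [->|y0] := eqVneq y 0; first by rewrite addr0 M0 addr0.
set a := M x; set b := M y.
have a0 : 0 < a by apply: M_gt0.
have b0 : 0 < b by apply: M_gt0.
have ab0 : 0 < a + b by rewrite addr_gt0.
have an0 := lt0r_neq0 a0; have bn0 := lt0r_neq0 b0; have abn0 := lt0r_neq0 ab0.
set t := a / (a + b).
have t01 : 0 <= t <= 1.
  apply/andP; split; first by rewrite divr_ge0 ?ltW.
  by rewrite ler_pdivrMr // mul1r lerDl ltW.
have := M_convw (a^-1 *: x) (b^-1 *: y) t t01.
have -> : t *: (a^-1 *: x) + (1 - t) *: (b^-1 *: y) = (a + b)^-1 *: (x + y).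
  rewrite !scalerA scalerDr; congr (_ *: _ + _ *: _).
    by rewrite /t mulrAC mulfV // mul1r.
  rewrite /t; field; by rewrite bn0 abn0.
rewrite !M_hom !gtr0_norm ?invr_gt0 // !mulVf // expr1n !mulr1 subrKC.
rewrite expr_le1 //; last by rewrite mulr_ge0 // invr_ge0 ltW.
by move=> h; rewrite -(ler_pM2l ab0) mulrA mulfV // mul1r mulr1 in h.
Qed.

End MinkFacts.

End P1.
Import P1.

Module P2.

Set Implicit Arguments. Unset Strict Implicit.

Section Gen.
Variable R : realType.

Lemma lip_cont (V W : normedModType R) (f : V -> W) C : 0 <= C ->
  (forall x y, `|f x - f y| <= C * `|x - y|) -> continuous f.
Proof.
move=> C0 H x; apply/cvgrPdist_lt => e e0.
have C1 : 0 < C + 1 by rewrite ltr_wpDl.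
near=> y.
apply: le_lt_trans (H x y) _.
apply: (@le_lt_trans _ _ ((C + 1) * `|x - y|)).
  by rewrite ler_wpM2r // lerDl.
rewrite mulrC -ltr_pdivlMr //.
near: y; apply: (@cvgr_dist_lt _ _ _ (nbhs x) _ id x cvg_id).
by rewrite divr_gt0.
Unshelve. all: by end_near. Qed.

Lemma coord_le_norm n (x : 'rV[R]_n) i : `|x ord0 i| <= `|x|.
Proof.
by rewrite [leRHS]/Num.norm /= mx_normrE; apply/bigmax_geP; right; exists (ord0, i).
Qed.

Lemma inner_le n (x y : 'rV[R]_n) : `|inner x y| <= n%:R * `|x| * `|y|.
Proof.
rewrite /inner (le_trans (ler_norm_sum _ _ _)) //.
apply: (@le_trans _ _ (\sum_(i < n) `|x| * `|y|)).
  by apply: ler_sum => i _; rewrite normrM ler_pM ?coord_le_norm.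
by rewrite sumr_const card_ord -mulrA mulr_natl.
Qed.

Lemma innerDr n (x y z : 'rV[R]_n) : inner x (y + z) = inner x y + inner x z.
Proof. by rewrite /inner -big_split /=; apply: eq_bigr => i _; rewrite mxE mulrDr. Qed.
Lemma innerDl n (x y z : 'rV[R]_n) : inner (y + z) x = inner y x + inner z x.
Proof. by rewrite /inner -big_split /=; apply: eq_bigr => i _; rewrite mxE mulrDl. Qed.
Lemma innerZr n (x y : 'rV[R]_n) a : inner x (a *: y) = a * inner x y.
Proof. by rewrite /inner mulr_sumr; apply: eq_bigr => i _; rewrite mxE mulrCA. Qed.
Lemma innerZl n (x y : 'rV[R]_n) a : inner (a *: y) x = a * inner y x.
Proof. by rewrite /inner mulr_sumr; apply: eq_bigr => i _; rewrite mxE mulrA. Qed.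
Lemma innerNr n (x y : 'rV[R]_n) : inner x (- y) = - inner x y.
Proof. by rewrite -scaleN1r innerZr mulN1r. Qed.
Lemma innerNl n (x y : 'rV[R]_n) : inner (- y) x = - inner y x.
Proof. by rewrite -scaleN1r innerZl mulN1r. Qed.
Lemma innerBr n (x y z : 'rV[R]_n) : inner x (y - z) = inner x y - inner x z.
Proof. by rewrite innerDr innerNr. Qed.
Lemma innerBl n (x y z : 'rV[R]_n) : inner (y - z) x = inner y x - inner z x.
Proof. by rewrite innerDl innerNl. Qed.

Lemma inner_self_gt0 n (x : 'rV[R]_n) : x != 0 -> 0 < inner x x.
Proof.
move=> x0.
have [i xi] : exists i, x ord0 i != 0.
  apply/existsP; move: x0; apply: contraR; rewrite negb_exists => /forallP h.
  apply/eqP/rowP => i; rewrite mxE; exact/eqP/negPn/h.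
rewrite /inner (bigD1 i) //= ltr_pwDl //; first by rewrite -expr2 exprn_even_gt0 // xi orbT.
by rewrite sumr_ge0 // => j _; rewrite -expr2 sqr_ge0.
Qed.

End Gen.

End P2.
Import P2.

Module P3.


Section Dual.
Variables (R : realType) (n : nat) (M : 'rV[R]_n -> R).
Hypothesis M_ge0 : forall x, 0 <= M x.
Hypothesis M_conv : forall x y t, x != y -> 0 < t < 1 ->
     M (t *: x + (1 - t) *: y) ^+ 2 < t * M x ^+ 2 + (1 - t) * M y ^+ 2.
Hypothesis M_hom : forall (l : R) x, M (l *: x) = `|l| * M x.
Hypothesis n_gt0 : (0 < n)%N.

Let M0 : M 0 = 0 := @P1.M0 R n M M_hom.
Let MN x : M (-x) = M x := @P1.MN R n M M_hom x.
Let M_tri x y : M (x + y) <= M x + M y := @P1.M_tri R n M M_ge0 M_conv M_hom x y.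
Let M_gt0 x : x != 0 -> 0 < M x := @P1.M_gt0 R n M M_ge0 M_conv M_hom x.

Lemma M_ub : exists2 C, 0 <= C & forall x, M x <= C * `|x|.
Proof.
exists (\sum_(j < n) M (delta_mx 0 j)); first by rewrite sumr_ge0.
move=> x; rewrite {1}(row_sum_delta x).
apply: (@le_trans _ _ (\sum_(j < n) M (x 0 j *: delta_mx 0 j))).
  elim/big_ind2: _ => //; first by rewrite M0.
  by move=> a b c d h1 h2; apply: le_trans (M_tri _ _) (lerD h1 h2).
rewrite mulr_suml; apply: ler_sum => j _; rewrite M_hom mulrC ler_wpM2l //.
exact: coord_le_norm.
Qed.

Lemma M_lip : exists2 C, 0 <= C & forall x y, `|M x - M y| <= C * `|x - y|.
Proof.
have [C C0 HC] := M_ub; exists C => // x y.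
apply: le_trans (HC (x - y)).
have h1 : M y <= M (x - y) + M x.
  by have := M_tri (y - x) x; rewrite subrK -(MN (x - y)) opprB.
have h2 : M x <= M (x - y) + M y.
  by have := M_tri (x - y) y; rewrite subrK.
rewrite ler_norml; apply/andP; split; lra.
Qed.

Lemma M_cont : continuous M.
Proof. by have [C C0 HC] := M_lip; exact: lip_cont C0 HC. Qed.

Lemma M_lb : exists2 c, 0 < c & forall x, c * `|x| <= M x.
Proof.
pose A := [set x : 'rV[R]_n | `|x| = 1].
have key x : x != 0 -> A (`|x|^-1 *: x).
  move=> x0; rewrite /A /= normrZ normfV normr_id mulVf //.
  by rewrite normr_eq0.
have keyM x : x != 0 -> M x = `|x| * M (`|x|^-1 *: x).
  move=> x0; rewrite M_hom normfV normr_id mulrA mulfV ?mul1r //.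
  by rewrite normr_eq0.
case: (pselect (A !=set0)) => [A0|A0]; last first.
  exists 1 => // x; have [->|x0] := eqVneq x 0; first by rewrite normr0 mulr0.
  by exfalso; apply: A0; exists (`|x|^-1 *: x); apply: key.
have cA : compact A.
  apply: bounded_closed_compact.
    by exists 1; split => // r r1 x /= ->; rewrite ltW.
  have := proj1 (continuous_closedP _) (@norm_continuous _ 'rV[R]_n) _ (@closed_eq R 1).
  by [].
have [c0 c0A Hc0] := compact_EVT_min A0 cA (@continuous_subspaceT _ _ A M M_cont).
rewrite inE in c0A.
have c00 : c0 != 0.
  by apply: contraPneq c0A => ->; rewrite /A /= normr0 => /esym/eqP; rewrite oner_eq0.
exists (M c0); first exact: M_gt0.
move=> x; have [->|x0] := eqVneq x 0; first by rewrite normr0 mulr0.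
rewrite [leRHS](keyM x x0) mulrC; apply: ler_wpM2l => //.
by apply: Hc0; rewrite inE; apply: key.
Qed.


Let S := [set xi : 'rV[R]_n | M xi = 1].
Let D := dual_norm M.

Lemma S_compact : compact S.
Proof.
have [c c0 Hc] := M_lb.
apply: bounded_closed_compact.
  exists c^-1; split; first exact: num_real.
  move=> r hr x /= Sx; apply: le_trans (ltW hr).
  by rewrite -[c^-1]mulr1 ler_pdivlMl // -Sx Hc.
by have := proj1 (continuous_closedP _) M_cont _ (@closed_eq R 1).
Qed.

Lemma S_ne : S !=set0.
Proof.
pose e : 'rV[R]_n := delta_mx 0 (Ordinal n_gt0).
have e0 : e != 0.
  apply/negP => /eqP /rowP /(_ (Ordinal n_gt0)); rewrite !mxE !eqxx /=.
  by move/eqP; rewrite oner_eq0.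
exists ((M e)^-1 *: e); rewrite /S /= M_hom normfV gtr0_norm ?M_gt0 //.
by rewrite mulVf // lt0r_neq0 // M_gt0.
Qed.

Lemma inner_lip (x : 'rV[R]_n) : forall a b : 'rV[R]_n,
  `|inner x a - inner x b| <= (n%:R * `|x|) * `|a - b|.
Proof. by move=> a b; rewrite -innerBr inner_le. Qed.

Lemma inner_cont (x : 'rV[R]_n) : continuous (inner x).
Proof.
by apply: lip_cont _ (inner_lip x); rewrite mulr_ge0.
Qed.

Lemma D_max x : exists2 xs, S xs &
  D x = inner x xs /\ forall xi, S xi -> inner x xi <= inner x xs.
Proof.
have [xs xsS Hxs] := compact_EVT_max S_ne S_compact
  (@continuous_subspaceT _ _ S _ (inner_cont x)).
rewrite inE in xsS.
have Hxs' xi : S xi -> inner x xi <= inner x xs.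
  by move=> Sxi; apply: Hxs; rewrite inE.
exists xs => //; split => //.
rewrite /D /dual_norm; apply/eqP; rewrite eq_le; apply/andP; split.
  apply: ge_sup; first by exists (inner x xs), xs.
  by move=> _ [xi Sxi <-]; apply: Hxs'.
apply: sup_upper_bound; last by exists xs.
split; first by exists (inner x xs), xs.
by exists (inner x xs) => _ [xi Sxi <-]; apply: Hxs'.
Qed.

Lemma D_ub x xi : S xi -> inner x xi <= D x.
Proof. by have [xs _ [-> H]] := D_max x; apply: H. Qed.

Lemma inner0r k (x : 'rV[R]_k) : inner x 0 = 0.
Proof. by rewrite /inner big1 // => i _; rewrite mxE mulr0. Qed.

Lemma D_ge x xi : inner x xi <= D x * M xi.
Proof.
have [->|xi0] := eqVneq xi 0; first by rewrite inner0r M0 mulr0.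
have Mxi := M_gt0 _ xi0.
have := D_ub x ((M xi)^-1 *: xi).
rewrite innerZr /S /= M_hom normfV gtr0_norm // mulVf ?lt0r_neq0 // => /(_ erefl).
by rewrite mulrC ler_pdivrMr.
Qed.

Lemma D_ge0 x : 0 <= D x.
Proof.
have [xs Sxs [-> H]] := D_max x.
have := H (- xs); rewrite innerNr /S /= MN => /(_ Sxs).
move=> h; lra.
Qed.

Lemma D_gt0 x : x != 0 -> 0 < D x.
Proof.
move=> x0; have := lt_le_trans (inner_self_gt0 x0) (D_ge x x).
by rewrite pmulr_lgt0 // M_gt0.
Qed.

Lemma D_lin : exists2 L, 0 <= L & forall x, D x <= L * `|x|.
Proof.
have [c c0 Hc] := M_lb.
exists (n%:R * c^-1); first by rewrite mulr_ge0 // invr_ge0 ltW.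
move=> x; have [xs Sxs [-> _]] := D_max x.
apply: le_trans (ler_norm _) _; apply: le_trans (inner_le _ _) _.
rewrite mulrAC; apply: ler_wpM2r => //; apply: ler_wpM2l => //.
by rewrite -[c^-1]mulr1 ler_pdivlMl // -Sxs Hc.
Qed.

Lemma D_tri x y : D (x + y) <= D x + D y.
Proof.
have [xs Sxs [-> _]] := D_max (x + y).
by rewrite innerDl lerD // D_ub.
Qed.

Lemma D_lip : exists2 L, 0 <= L & forall x v, `|D (x + v) - D x| <= L * `|v|.
Proof.
have [L L0 HL] := D_lin; exists L => // x v.
have h1 : D (x + v) <= D x + L * `|v|.
  by apply: le_trans (D_tri _ _) _; rewrite lerD2l HL.
have h2 : D x <= D (x + v) + L * `|v|.
  have := D_tri (x + v) (- v); rewrite addrK => /le_trans; apply.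
  by rewrite lerD2l -(normrN v) HL.
rewrite ler_norml; apply/andP; split; lra.
Qed.

Lemma D_uniq x a b : x != 0 -> S a -> S b -> inner x a = D x -> inner x b = D x -> a = b.
Proof.
move=> x0 Sa Sb ha hb; apply/eqP; apply/negPn/negP => ab.
have h12 : 0 < (2^-1 : R) < 1.
  by rewrite invr_gt0 ltr0n /= invf_lt1 // ltr1n.
have := M_conv _ _ _ ab h12.
rewrite Sa Sb expr1n !mulr1 subrKC.
set m := _ + _.
have im : inner x m = D x.
  rewrite /m innerDr !innerZr ha hb -mulrDl subrKC mul1r //.
have := D_ge x m; rewrite im -{1}(mulr1 (D x)) ler_pM2l ?D_gt0 // => h1.
have : 1 <= M m ^+ 2 by rewrite -(expr1n _ 2) lerXn2r ?nnegrE.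
by move=> h2 h3; have := le_lt_trans h2 h3; rewrite ltxx.
Qed.


Lemma S_bound : exists2 B, 0 < B & forall xi, S xi -> `|xi| <= B.
Proof.
have [c c0 Hc] := M_lb; exists c^-1; first by rewrite invr_gt0.
by move=> xi Sxi; rewrite -[c^-1]mulr1 ler_pdivlMl // -Sxi Hc.
Qed.

Lemma dist_cont (xs : 'rV[R]_n) : continuous (fun xi : 'rV[R]_n => `|xi - xs|).
Proof.
apply: (@lip_cont _ _ _ _ 1) => // a b; rewrite mul1r.
by apply: le_trans (ler_dist_dist _ _) _; rewrite opprB addrA subrK.
Qed.

Lemma D_sep x xs : x != 0 -> S xs -> D x = inner x xs ->
  forall e', 0 < e' -> exists2 d', 0 < d' &
    forall xi, S xi -> D x - d' <= inner x xi -> `|xi - xs| < e'.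
Proof.
move=> x0 Sxs Dxs e' e0.
pose T := S `&` [set xi | e' <= `|xi - xs|].
case: (pselect (T !=set0)) => [T0|T0]; last first.
  exists 1 => // xi Sxi _; rewrite ltNge; apply/negP => h.
  by apply: T0; exists xi.
have cT : compact T.
  rewrite /T; apply: (compact_closedI S_compact).
  by have := proj1 (continuous_closedP _) (dist_cont xs) _ (@closed_ge R e').
have [xt xtT Hxt] := compact_EVT_max T0 cT
  (@continuous_subspaceT _ _ T _ (inner_cont x)).
rewrite inE in xtT; case: xtT => Sxt dxt.
have lt : inner x xt < D x.
  rewrite lt_neqAle D_ub // andbT; apply/negP => /eqP h.
  have ext := D_uniq _ _ _ x0 Sxt Sxs h (esym Dxs).
  by move: dxt => /=; rewrite ext subrr normr0 leNgt e0.
exists ((D x - inner x xt) / 2); first by rewrite divr_gt0 // subr_gt0.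
move=> xi Sxi hxi; rewrite ltNge; apply/negP => h.
have : inner x xi <= inner x xt by apply: Hxt; rewrite inE.
move: hxi => h1 h2.
lra.
Qed.

Lemma D_diff x : x != 0 -> exists2 xs, S xs & D x = inner x xs /\
  forall eta, 0 < eta -> exists2 del, 0 < del & forall v, `|v| < del ->
    `|D (x + v) - D x - inner v xs| <= eta * `|v|.
Proof.
move=> x0; have [xs Sxs [Dxs _]] := D_max x.
exists xs => //; split => // eta eta0.
have N0 : 0 < n%:R :> R by rewrite ltr0n.
have [B B0 HB] := S_bound.
have [d' d0 Hd] := D_sep _ _ x0 Sxs Dxs _ (divr_gt0 eta0 N0).
have P0 : 0 < n%:R * (B + B) + 1 by rewrite ltr_wpDl // mulr_ge0 // ltW // addr_gt0.
exists (d' / (n%:R * (B + B) + 1)); first by rewrite divr_gt0.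
move=> v hv.
have [xv Sxv [Dxv _]] := D_max (x + v).
have lo : D x + inner v xs <= D (x + v).
  by rewrite Dxs -innerDl D_ub.
have hi1 : D (x + v) <= D x + inner v xv.
  by rewrite Dxv innerDl lerD2r D_ub.
have bnd a b : S a -> S b -> `|inner v a - inner v b| <= n%:R * `|v| * (B + B).
  move=> Sa Sb; rewrite -innerBr; apply: le_trans (inner_le _ _) _.
  apply: ler_wpM2l; first by rewrite mulr_ge0.
  by apply: le_trans (ler_normB _ _) _; rewrite lerD ?HB.
have vsmall : n%:R * `|v| * (B + B) <= d'.
  have := ltW hv; rewrite ler_pdivlMr // => h; apply: le_trans h.
  have := normr_ge0 v; nra.
have close : `|xv - xs| < eta / n%:R.
  apply: Hd => //.
  have := bnd _ _ Sxs Sxv; rewrite ler_norml => /andP[h1 h2].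
  have : inner x xv = D (x + v) - inner v xv by rewrite Dxv innerDl addrK.
  move=> ->; lra.
rewrite ler_norml; apply/andP; split.
  have := mulr_ge0 (ltW eta0) (normr_ge0 v); lra.
have : D (x + v) - D x - inner v xs <= inner v (xv - xs).
  by rewrite innerBr; lra.
move=> /le_trans; apply; apply: le_trans (ler_norm _) _.
apply: le_trans (inner_le _ _) _.
have := ltW close; rewrite ler_pdivlMr // => hc.
have := normr_ge0 v; nra.
Qed.


Lemma D0 : D 0 = 0.
Proof.
have [L L0 HL] := D_lin; apply/eqP; rewrite eq_le D_ge0 andbT.
by have := HL 0; rewrite normr0 mulr0.
Qed.

Lemma h_diff x : exists g, M g ^+ 2 = 4 * D x ^+ 2 /\
  forall eta, 0 < eta -> exists2 del, 0 < del & forall v, `|v| < del ->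
    `|D (x + v) ^+ 2 - D x ^+ 2 - inner v g| <= eta * `|v|.
Proof.
have [L L0 HL] := D_lin.
have [L' L'0 HL'] := D_lip.
have [->|x0] := eqVneq x 0.
  exists 0; rewrite M0 D0 expr0n /= mulr0; split => // eta eta0.
  have P0 : 0 < L ^+ 2 + 1 by rewrite ltr_wpDl ?sqr_ge0.
  exists (eta / (L ^+ 2 + 1)); first by rewrite divr_gt0.
  move=> v hv; rewrite add0r subr0 inner0r subr0 ger0_norm ?exprn_ge0 ?D_ge0 //.
  have h2 : `|v| * (L ^+ 2 + 1) <= eta by rewrite -ler_pdivlMr // ltW.
  have a : D v ^+ 2 <= (L * `|v|) ^+ 2.
    by rewrite lerXn2r ?nnegrE ?D_ge0 ?mulr_ge0 ?HL.
  have := normr_ge0 v; have := sqr_ge0 L; nra.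
have [xs Sxs [Dxs Hd]] := D_diff _ x0.
have Dx0 := D_gt0 _ x0.
exists ((2 * D x) *: xs); split.
  have Mxs : M xs = 1 := Sxs.
  rewrite M_hom Mxs mulr1 ger0_norm; first ring.
  by rewrite mulr_ge0 // D_ge0.
move=> eta eta0.
have P1 : 0 < 4 * D x + 1 by rewrite ltr_wpDl ?mulr_ge0 ?ltW.
have P2 : 0 < 2 * (L' ^+ 2 + 1) by rewrite mulr_gt0 // ltr_wpDl ?sqr_ge0.
have [del1 del10 H1] := Hd _ (divr_gt0 eta0 P1).
exists (Num.min del1 (eta / (2 * (L' ^+ 2 + 1)))).
  by rewrite lt_min del10 divr_gt0.
move=> v; rewrite lt_min => /andP[hv1 hv2].
have f1 : `|v| * (2 * (L' ^+ 2 + 1)) <= eta by rewrite -ler_pdivlMr // ltW.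
have f2 := H1 _ hv1.
set e1 := eta / (4 * D x + 1) in f2.
have f3 : (4 * D x) * e1 <= eta.
  rewrite /e1 mulrA ler_pdivrMr //; nra.
set d := D (x + v) - D x in f2 *.
have f4 : d ^+ 2 <= (L' * `|v|) ^+ 2.
  by rewrite -real_normK ?num_real // lerXn2r ?nnegrE ?mulr_ge0 // HL'.
have -> : D (x + v) ^+ 2 - D x ^+ 2 - inner v ((2 * D x) *: xs)
    = d ^+ 2 + 2 * D x * (d - inner v xs).
  by rewrite innerZr /d; ring.
apply: le_trans (ler_normD _ _) _.
rewrite ger0_norm ?sqr_ge0 // normrM (ger0_norm (x := 2 * D x)); last first.
  by rewrite mulr_ge0 // ltW.
have := normr_ge0 v; have := sqr_ge0 L'; have := normr_ge0 (d - inner v xs).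
have e10 : 0 <= e1 by rewrite /e1 divr_ge0 ?ltW.
move=> ha hL hw.
set a := `|d - inner v xs| in f2 ha *; set w := `|v| in f1 f2 f4 hw *.
have g1 : 2 * D x * a <= 2 * D x * (e1 * w).
  by apply: ler_wpM2l => //; rewrite mulr_ge0 // ltW.
have g2 : 2 * D x * (e1 * w) <= eta / 2 * w.
  rewrite mulrA; apply: ler_wpM2r => //; lra.
have g3 : (L' * w) ^+ 2 <= eta / 2 * w.
  rewrite exprMn expr2 mulrA; apply: ler_wpM2r => //; nra.
lra.
Qed.

End Dual.

End P3.
Import P3.


Section Fin.
Variable R : realType.

Lemma diff_of_est (V : normedModType R) (f : V -> R) (L : {linear V -> R}) x C :
  0 <= C -> (forall v, `|L v| <= C * `|v|) ->
  (forall eta, 0 < eta -> exists2 del, 0 < del & forall v, `|v| < del ->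
     `|f (x + v) - f x - L v| <= eta * `|v|) ->
  differentiable f x /\ 'd f x = L :> (V -> R).
Proof.
move=> C0 HC Hest.
have Lc : continuous L.
  by apply: (lip_cont C0) => a b; rewrite -linearB HC.
have H : f \o shift x = cst (f x) + L +o_ 0 id.
  apply/eqaddoP => eps eps0.
  have [del del0 Hd] := Hest eps eps0.
  near=> v.
  rewrite !fctE /= opprD addrA (addrC v); apply: Hd.
  by near: v; apply: nbhs0_lt.
split; last exact: diff_unique Lc H.
by apply/diff_locallyP; rewrite (diff_unique Lc H).
Unshelve. all: by end_near. Qed.


Definition linz m k (g : 'rV[R]_m) := fun v : 'rV[R]_m * 'rV[R]_k => inner v.1 g.
Definition lins m k (g : 'rV[R]_k) := fun v : 'rV[R]_m * 'rV[R]_k => inner v.2 g.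

Lemma linz_lin m k g : linear (@linz m k g).
Proof. by move=> a u w; rewrite /linz /= innerDl innerZl. Qed.
Lemma lins_lin m k g : linear (@lins m k g).
Proof. by move=> a u w; rewrite /lins /= innerDl innerZl. Qed.

HB.instance Definition _ (m k : nat) (g : 'rV[R]_m) := GRing.isLinear.Build R ('rV[R]_m * 'rV[R]_k)%type R *%R (@linz m k g) (@linz_lin m k g).
HB.instance Definition _ (m k : nat) (g : 'rV[R]_k) := GRing.isLinear.Build R ('rV[R]_m * 'rV[R]_k)%type R *%R (@lins m k g) (@lins_lin m k g).

Lemma inner_evec n (i : 'I_n) (g : 'rV[R]_n) : inner (evec R i) g = g ord0 i.
Proof.
rewrite /inner (bigD1 i) //= big1 => [|j ji]; rewrite /evec mxE.
  by rewrite !eqxx /= mul1r addr0.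
by rewrite (negbTE ji) andbF mul0r.
Qed.

Lemma inner0l n (g : 'rV[R]_n) : inner 0 g = 0.
Proof. by rewrite /inner big1 // => i _; rewrite mxE mul0r. Qed.


Lemma f1_diff m k (M : 'rV[R]_m -> R) (z : 'rV[R]_m) (sig : 'rV[R]_k) g :
  (forall eta, 0 < eta -> exists2 del, 0 < del & forall v, `|v| < del ->
     `|dual_norm M (z + v) ^+ 2 - dual_norm M z ^+ 2 - inner v g| <= eta * `|v|) ->
  differentiable (fun p : 'rV[R]_m * 'rV[R]_k => dual_norm M p.1 ^+ 2) (z, sig) /\
  'd (fun p : 'rV[R]_m * 'rV[R]_k => dual_norm M p.1 ^+ 2) (z, sig) = @linz m k g
    :> ('rV[R]_m * 'rV[R]_k -> R).
Proof.
move=> H; apply: (@diff_of_est _ _ (@linz m k g) _ (m%:R * `|g|)).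
- by rewrite mulr_ge0.
- move=> v; rewrite /linz; apply: le_trans (inner_le _ _) _.
  rewrite mulrAC; apply: ler_wpM2l; first by rewrite mulr_ge0.
  by rewrite prod_normE le_max lexx.
- move=> eta eta0; have [del del0 Hd] := H eta eta0; exists del => // v hv.
  have h1 : `|v.1| <= `|v| by rewrite prod_normE le_max lexx.
  apply: le_trans (Hd v.1 (le_lt_trans h1 hv)) _.
  by apply: ler_wpM2l => //; rewrite ltW.
Qed.

Lemma f2_diff m k (M : 'rV[R]_k -> R) (z : 'rV[R]_m) (sig : 'rV[R]_k) g :
  (forall eta, 0 < eta -> exists2 del, 0 < del & forall v, `|v| < del ->
     `|dual_norm M (sig + v) ^+ 2 - dual_norm M sig ^+ 2 - inner v g| <= eta * `|v|) ->
  differentiable (fun p : 'rV[R]_m * 'rV[R]_k => dual_norm M p.2 ^+ 2) (z, sig) /\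
  'd (fun p : 'rV[R]_m * 'rV[R]_k => dual_norm M p.2 ^+ 2) (z, sig) = @lins m k g
    :> ('rV[R]_m * 'rV[R]_k -> R).
Proof.
move=> H; apply: (@diff_of_est _ _ (@lins m k g) _ (k%:R * `|g|)).
- by rewrite mulr_ge0.
- move=> v; rewrite /lins; apply: le_trans (inner_le _ _) _.
  rewrite mulrAC; apply: ler_wpM2l; first by rewrite mulr_ge0.
  by rewrite prod_normE le_max lexx orbT.
- move=> eta eta0; have [del del0 Hd] := H eta eta0; exists del => // v hv.
  have h1 : `|v.2| <= `|v| by rewrite prod_normE le_max lexx orbT.
  apply: le_trans (Hd v.2 (le_lt_trans h1 hv)) _.
  by apply: ler_wpM2l => //; rewrite ltW.
Qed.

End Fin.


Theorem lemma2p5 (R : realType) (m k : nat) (hm : (1 <= m)%N) (hk : (1 <= k)%N)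
  (Phi : 'rV[R]_m -> R) (Psi : 'rV[R]_k -> R)
  (hPhi : minkowski_norm Phi) (hPsi : minkowski_norm Psi)
  (eps : R) (heps : 0 < eps) (z : 'rV[R]_m) (sigma : 'rV[R]_k) :
  let K := fun p : 'rV[R]_m * 'rV[R]_k =>
    (eps ^+ 2 + dual_norm Phi p.1 ^+ 2) ^+ 2 + 16 * dual_norm Psi p.2 ^+ 2 in
  differentiable K (z, sigma) /\
  Phi (grad_z K (z, sigma)) ^+ 2
    + dual_norm Phi z ^+ 2 / 4 * Psi (grad_s K (z, sigma)) ^+ 2
  = 16 * dual_norm Phi z ^+ 2 * K (z, sigma).
Proof.
move=> K.
case: hPhi => [P0 [_ [Pc Ph]]]; case: hPsi => [Q0 [_ [Qc Qh]]].
have [g1 [Hg1 E1]] := @h_diff R m Phi P0 Pc Ph hm z.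
have [g2 [Hg2 E2]] := @h_diff R k Psi Q0 Qc Qh hk sigma.
have [d1 dd1] := @f1_diff R m k Phi z sigma g1 E1.
have [d2 dd2] := @f2_diff R m k Psi z sigma g2 E2.
set f1 := (fun p : 'rV[R]_m * 'rV[R]_k => dual_norm Phi p.1 ^+ 2) in d1 dd1.
set f2 := (fun p : 'rV[R]_m * 'rV[R]_k => dual_norm Psi p.2 ^+ 2) in d2 dd2.
have KE : K = (cst (eps ^+ 2) + f1) ^+ 2 + (16 : R) *: f2.
  by apply/funext => p; rewrite /K /f1 /f2 !fctE.
have dc : differentiable (cst (eps ^+ 2) + f1) (z, sigma).
  exact: differentiableD (differentiable_cst _ _) d1.
have dX : differentiable ((cst (eps ^+ 2) + f1) ^+ 2) (z, sigma).
  exact: differentiableX.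
have dZ : differentiable ((16 : R) *: f2) (z, sigma) by exact: differentiableZ.
have dK : differentiable K (z, sigma) by rewrite KE; exact: differentiableD.
have dKv v : 'D_v K (z, sigma) =
    2 * (eps ^+ 2 + f1 (z, sigma)) * inner v.1 g1 + 16 * inner v.2 g2.
  rewrite deriveE // {1}KE diffD // diffX // diffD //.
  rewrite diff_cst dd1 diffZ // dd2 /= /linz /lins !fctE /= expr1.
  by rewrite (_ : (0 : ('rV[R]_m * 'rV[R]_k)%type -> R) v = 0) // add0r.
split => //.
have gz : grad_z K (z, sigma) = (2 * (eps ^+ 2 + f1 (z, sigma))) *: g1.
  by apply/rowP => i; rewrite !mxE dKv /= inner_evec inner0l mulr0 addr0.
have gs : grad_s K (z, sigma) = 16 *: g2.
  by apply/rowP => i; rewrite !mxE dKv /= inner_evec inner0l mulr0 add0r.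
rewrite gz gs Ph Qh !exprMn Hg1 Hg2 ger0_norm; last first.
  by rewrite mulr_ge0 // addr_ge0 // sqr_ge0.
by rewrite ger0_norm // /K /f1 /=; field.
Qed.
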